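(* Let $g(x;\theta)$ be a family of densities in the class $\mathcal{G}$ with $g(x;0)=\alpha x^{-\alpha-1}$, and let $h(x)=\frac{\partial}{\partial\theta}g(x;\theta)\big|_{\theta=0}$. Suppose the Kullback–Leibler information $$K(\theta)=\inf_{\lambda>0}\int_1^\infty \ln\frac{g(x;\theta)}{\lambda x^{-\lambda-1}}\,g(x;\theta)\,dx$$ is well defined. Then, as $\theta\to0$, $$2K(\theta)=\theta^2\left(\int_1^\infty \frac{x^{\alpha+1}}{\alpha}h^2(x)\,dx-\left(\int_1^\infty \alpha h(x)\ln x\,dx\right)^2\right)+o(\theta^2).$$
   Context: $\mathcal{G}$ is a class of families of densities $g(x;\theta)$ on $[1,\infty)$, $\theta$ in a neighbourhood of $0$, with $g(x;0)$ a Pareto density $\alpha x^{-\alpha-1}$ ($\alpha>0$), such that differentiation in $\theta$ under the integral sign is permitted in all integrals appearing. *)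

(* Defs.v *)
From HB Require Import structures.
From mathcomp Require Import all_boot all_order all_algebra.
From mathcomp Require Import all_classical all_reals all_analysis.
Set Implicit Arguments. Unset Strict Implicit. Unset Printing Implicit Defensive.
Import Order.TTheory GRing.Theory Num.Theory.
Import numFieldNormedType.Exports.
Local Open Scope classical_set_scope.
Local Open Scope ring_scope.

Definition Dom (R : realType) : set R := `[1%R, +oo[%classic.

Definition integ1 (R : realType) (f : R -> R) : Prop :=
  (@lebesgue_measure R).-integrable (@Dom R) (EFin \o f).

Definition int1 (R : realType) (f : R -> R) : R :=
  Rintegral (@lebesgue_measure R) (@Dom R) f.

Definition dth (R : realType) (F : R -> R -> R) : R -> R -> R :=
  fun x t => derive1 (F x) t.
Definition d2th (R : realType) (F : R -> R -> R) : R -> R -> R :=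
  fun x t => derive1 (dth F x) t.

Definition diff_under_int (R : realType) (eps : R) (F : R -> R -> R) : Prop :=
  forall t : R, `|t| < eps ->
    [/\ forall x, 1 <= x -> derivable (F x) t 1 /\ derivable (dth F x) t 1,
        integ1 (fun x => F x t),
        integ1 (fun x => dth F x t),
        integ1 (fun x => d2th F x t)
      & is_derive t 1 (fun s => int1 (fun x => F x s)) (int1 (fun x => dth F x t))
        /\ is_derive t 1 (fun s => int1 (fun x => dth F x s)) (int1 (fun x => d2th F x t))].

(* The class G: families of densities g(x;theta) on [1,oo), theta near 0,
   with g(x;0) = alpha x^(-alpha-1), for which differentiation in theta under
   the integral sign is permitted in the integrals appearing (those of g,
   g ln g and g ln x, the constituents of the KL integrand). *)
Definition classG (R : realType) (alpha : R) (g : R -> R -> R) : Prop :=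
  0 < alpha /\
  (forall x : R, 1 <= x -> g x 0 = alpha * x `^ (- alpha - 1)) /\
  exists2 eps : R, 0 < eps &
    [/\ forall t : R, `|t| < eps ->
          (forall x : R, 1 <= x -> 0 < g x t) /\
          integ1 (fun x => g x t) /\ int1 (fun x => g x t) = 1,
        diff_under_int eps g,
        diff_under_int eps (fun x t => g x t * ln (g x t))
      & diff_under_int eps (fun x t => g x t * ln x)].

Definition KLintegrand (R : realType) (g : R -> R -> R) (t lam : R) : R -> R :=
  fun x => ln (g x t / (lam * x `^ (- lam - 1))) * g x t.

Definition KL (R : realType) (g : R -> R -> R) (t : R) : \bar R :=
  ereal_inf [set (\int[@lebesgue_measure R]_(x in @Dom R) (KLintegrand g t lam x)%:E)%E
            | lam in `]0%R, +oo[%classic].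

(* Main.v *)
Require Import Defs.
From HB Require Import structures.
From mathcomp Require Import all_boot all_order all_algebra.
From mathcomp Require Import all_classical all_reals all_analysis.
From mathcomp Require Import ring lra.
Set Implicit Arguments. Unset Strict Implicit. Unset Printing Implicit Defensive.
Import Order.TTheory GRing.Theory Num.Theory.
Import numFieldNormedType.Exports.
Local Open Scope classical_set_scope.
Local Open Scope ring_scope.

Lemma powRNy0 (R : realType) (b : R) : 0 < b -> x `^ (- b) @[x --> +oo] --> 0.
Proof.
move=> b0; apply/cvgrPdist_le => e e0.
have M0 : 0 < e `^ (- b^-1) by rewrite powR_gt0.
near=> x.
have xM : e `^ (- b^-1) <= x by near: x; apply: nbhs_pinfty_ge; rewrite num_real.
have x0 : 0 < x by exact: lt_le_trans xM.
rewrite sub0r normrN ger0_norm ?powR_ge0// powRN.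
have : (e `^ (- b^-1)) `^ b <= x `^ b.
  by rewrite (ge0_ler_powR (ltW b0)) ?nnegrE ?ltW.
rewrite -powRrM mulNr mulVf ?gt_eqF// powRN powRr1 ?(ltW e0)// => H.
by rewrite invf_ple ?posrE ?powR_gt0.
Unshelve. all: by end_near.
Qed.

Lemma paretoF_derive (R : realType) (a x : R) : 0 < a -> 0 < x ->
  is_derive x 1 (fun y : R => - (y `^ (- a) * (ln y + a^-1)))
   (a * x `^ (- a - 1) * ln x).
Proof.
move=> a0 x0.
have h1 := is_derive1_powR (- a) x0.
have h2 := is_derive1_ln x0.
have h3 : is_derive x 1 (fun y : R => ln y + a^-1) x^-1.
  by rewrite -[x^-1]addr0; apply: is_deriveD.
have h4 := is_deriveM h1 h3.
have h5 := is_deriveN h4.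
apply: is_derive_eq.
have E : x `^ (- a - 1) = x `^ (- a) * x^-1.
  by rewrite powRD ?powR_inv1 ?(ltW x0)// (gt_eqF x0) implybT.
rewrite E /GRing.scale /=; field.
by rewrite (gt_eqF x0) (gt_eqF a0).
Qed.

Lemma powR_cont (R : realType) (b x : R) : 0 < x -> {for x, continuous (fun y : R => y `^ b)}.
Proof.
move=> x0; apply: differentiable_continuous; apply/derivable1_diffP.
by apply: derivable_powR; rewrite in_itv /= x0.
Qed.

Lemma int_pareto_ln (R : realType) (a : R) : 0 < a ->
  int1 (fun x => a * x `^ (- a - 1) * ln x) = a^-1.
Proof.
move=> a0; rewrite /int1 /Dom.
pose F := fun y : R => - (y `^ (- a) * (ln y + a^-1)).
rewrite (@Rintegral_ge0_continuous_FTC2y R _ F 1 0).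
- by rewrite /F powR1 ln1 add0r mul1r opprK add0r.
- by move=> x x1; rewrite mulr_ge0 ?ln_ge0 ?mulr_ge0 ?powR_ge0 ?(ltW a0).
- apply: (@continuous_in_subspaceT R R) => x; rewrite inE /= in_itv /= andbT => x1.
  have x0 : 0 < x by exact: lt_le_trans x1.
  apply: cvgM; last exact: continuous_ln.
  apply: cvgM; first exact: cvg_cst.
  exact: powR_cont.
- have a20 : 0 < a / 2 by rewrite divr_gt0.
  apply: (@squeeze_cvgr _ _ _ _ (fun y => - (3 / a) * y `^ (- (a / 2))) (fun=> 0)).
  + near=> y.
    have y1 : 1 <= y by near: y; apply: nbhs_pinfty_ge; rewrite num_real.
    have y0 : 0 < y by exact: lt_le_trans y1.
    have hPz : y `^ (- (a / 2)) = y `^ (- a) * y `^ (a / 2).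
      rewrite -powRD; last by rewrite (gt_eqF y0) implybT.
      by congr (_ `^ _); field.
    have hL : (a / 2) * ln y <= y `^ (a / 2) - 1.
      have := @le_ln1Dx _ (y `^ (a / 2) - 1).
      rewrite [1 + _]addrC subrK ln_powR; apply.
      have := powR_gt0 (a / 2) y0; lra.
    have hPQ : y `^ (- a) <= y `^ (- (a / 2)).
      by apply: ler_powR => //; rewrite lerN2 ler_pdivrMr //; lra.
    have P0 := powR_ge0 y (- a).
    have L0 := ln_ge0 y1.
    have H := ler_wpM2l P0 hL.
    have ia0 : 0 < a^-1 by rewrite invr_gt0.
    have aia : a * a^-1 = 1 by rewrite mulfV ?gt_eqF.
    rewrite /F; apply/andP; split; last first.
      by rewrite oppr_le0 mulr_ge0 // addr_ge0 // ltW.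
    rewrite mulNr lerN2.
    move: hPz H hPQ P0 L0 ia0 aia.
    set P := y `^ (- a); set Q := y `^ (- (a / 2)); set z := y `^ (a / 2);
    set L := ln y; set ia := a^-1 => hPz H hPQ P0 L0 ia0 aia.
    have E : P * L = 2 * ia * (P * (a / 2 * L)).
      rewrite /ia; field; by rewrite gt_eqF.
    rewrite mulrDr E /ia -/ia.
    have H2 : P * (z - 1) = Q - P by rewrite hPz; ring.
    rewrite [3 / a]mulrC -/ia.
    nra.
  + rewrite -[X in _ --> X](mulr0 (- (3 / a))).
    by have := (cvgMl_tmp (a := - (3 / a)) (powRNy0 a20)); move=> /(_ (@proper_pinfty_nbhs R)).
  + exact: cvg_cst.
- move=> x x1; have x0 : 0 < x by exact: lt_trans x1.
  exact: (@ex_derive _ _ _ _ _ _ _ (paretoF_derive a0 x0)).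
- apply: cvg_at_right_filter; apply: differentiable_continuous; apply/derivable1_diffP.
  exact: (@ex_derive _ _ _ _ _ _ _ (paretoF_derive a0 ltr01)).
- move=> x; rewrite in_itv /= andbT => x1; rewrite derive1E.
  have x0 : 0 < x by exact: lt_trans x1.
  exact: (@derive_val _ _ _ _ _ _ _ (paretoF_derive a0 x0)).
Unshelve. all: by end_near. Qed.
Lemma deriv_small (R : realType) (g : R -> R) (c e : R) : 0 < e ->
  is_derive (0:R) (1:R) g c -> exists2 d, 0 < d &
    forall h, `|h| < d -> `|g h - g 0 - c * h| <= e * `|h|.
Proof.
move=> e0 D.
have H : (fun h : R => h^-1 *: ((g \o shift 0) (h *: 1) - g 0)) @ 0^' --> 'D_1 g 0.
  exact: (@ex_derive _ _ _ _ _ _ _ D).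
rewrite (@derive_val _ _ _ _ _ _ _ D) in H.
move/cvgrPdist_le: H => /(_ e e0).
rewrite near_withinE => /nbhs_normP [d /= d0 Hd].
exists d => // h hd.
have [->|h0] := eqVneq h 0; first by rewrite normr0 mulr0 subrr mulr0 subr0 normr0.
have := Hd h; rewrite /= sub0r normrN => /(_ hd h0).
rewrite /shift /= addr0 /GRing.scale /= mulr1.
move=> H.
have -> : g h - g 0 - c * h = - (h * (c - h^-1 * (g h - g 0))).
  by field.
by rewrite normrN normrM mulrC ler_wpM2r.
Qed.

Lemma taylor2 (R : realType) (f df : R -> R) (c r : R) : 0 < r ->
  (forall t : R, `|t| < r -> is_derive t (1:R) f (df t)) -> f 0 = 0 -> df 0 = 0 ->
  is_derive (0:R) (1:R) df c ->
  forall e, 0 < e -> exists2 d, 0 < d &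
    forall t, `|t| < d -> `|2 * f t - t ^+ 2 * c| <= e * t ^+ 2.
Proof.
move=> r0 Df f0 df0 D2 e e0.
have e20 : 0 < e / 2 by rewrite divr_gt0.
have [d d0 Hd] := deriv_small e20 D2.
exists (Num.min d r); first by rewrite lt_min d0 r0.
move=> t; rewrite lt_min => /andP[td tr].
pose q := fun s : R => f s - c / 2 * (s * s).
have Dq : forall s : R, `|s| < r -> is_derive s (1:R) q (df s - c * s).
  move=> s sr; have h1 := Df s sr.
  have h2 : is_derive s (1:R) (fun s : R => c / 2 * (s * s)) (c * s).
    apply: is_derive_eq.
    by rewrite /GRing.scale /=; field.
  apply: is_derive_eq.
  by rewrite /GRing.scale /=.
have bnd : forall s, `|s| <= `|t| -> `|df s - c * s| <= e / 2 * `|t|.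
  move=> s st.
  have := Hd s (le_lt_trans st td); rewrite df0 subr0.
  move/le_trans; apply; by rewrite ler_wpM2l ?(ltW e20).
have key : `|q t| <= e / 2 * `|t| * `|t|.
  have [t0|t0|->] := ltgtP t 0; last first.
  - by rewrite /q f0 !(mulr0, mul0r, subr0, normr0).
  - have Dq' : forall x, x \in `]0, t[%R -> is_derive x (1:R) q (df x - c * x).
      move=> x; rewrite in_itv /= => /andP[tx x0]; apply: Dq.
      move: tr; rewrite !ltr_norml => /andP[h1 h2]; apply/andP; split; lra.
    have cq : {within `[0, t], continuous q}.
      apply: derivable_within_continuous => x; rewrite in_itv /= => /andP[tx x0].
      have xr : `|x| < r.
        move: tr; rewrite !ltr_norml => /andP[h1 h2]; apply/andP; split; lra.
      exact: (@ex_derive _ _ _ _ _ _ _ (Dq x xr)).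
    have [xi xi_in E] := MVT t0 Dq' cq.
    move: xi_in; rewrite in_itv /= => /andP[txi xi0].
    have xit : `|xi| <= `|t| by rewrite !gtr0_norm //; lra.
    have q0 : q 0 = 0 by rewrite /q f0 !(mulr0, mul0r, subr0).
    move: E; rewrite q0 subr0 => ->.
    rewrite normrM subr0; apply: ler_wpM2r => //; exact: bnd.
  - have Dq' : forall x, x \in `]t, 0[%R -> is_derive x (1:R) q (df x - c * x).
      move=> x; rewrite in_itv /= => /andP[tx x0]; apply: Dq.
      move: tr; rewrite !ltr_norml => /andP[h1 h2]; apply/andP; split; lra.
    have cq : {within `[t, 0], continuous q}.
      apply: derivable_within_continuous => x; rewrite in_itv /= => /andP[tx x0].
      have xr : `|x| < r.
        move: tr; rewrite !ltr_norml => /andP[h1 h2]; apply/andP; split; lra.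
      exact: (@ex_derive _ _ _ _ _ _ _ (Dq x xr)).
    have [xi xi_in E] := MVT t0 Dq' cq.
    move: xi_in; rewrite in_itv /= => /andP[txi xi0].
    have xit : `|xi| <= `|t| by rewrite !ltr0_norm //; lra.
    have q0 : q 0 = 0 by rewrite /q f0 !(mulr0, mul0r, subr0).
    move: E; rewrite q0 sub0r => E.
    have -> : q t = - ((df xi - c * xi) * (0 - t)) by rewrite -E opprK.
    rewrite normrN normrM sub0r normrN; apply: ler_wpM2r => //; exact: bnd.
have -> : 2 * f t - t ^+ 2 * c = 2 * q t by rewrite /q; field.
rewrite normrM ger0_norm // -real_normK ?num_real //.
move: key; set a := `|q t|; set b := `|t|; nra.
Qed.

Lemma inDom {R : realType} (x : R) : (x \in @Dom R) = (1 <= x).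
Proof. by apply/idP/idP; rewrite /Dom in_setE /= in_itv /= andbT. Qed.

Lemma integ1_eq {R : realType} (f g : R -> R) : (forall x, 1 <= x -> f x = g x) -> integ1 f -> integ1 g.
Proof.
move=> fg; apply: eq_integrable; first exact: (@measurable_itv R `[1, +oo[%R).
by move=> x; rewrite inDom => x1 /=; rewrite fg.
Qed.

Lemma int1_eq {R : realType} (f g : R -> R) : (forall x, 1 <= x -> f x = g x) -> int1 f = int1 g.
Proof. by move=> fg; apply: eq_Rintegral => x; rewrite inDom => x1; rewrite fg. Qed.

Lemma integ1D {R : realType} (f g : R -> R) : integ1 f -> integ1 g -> integ1 (fun x => f x + g x).
Proof.
move=> If Ig; have := integrableD _ If Ig; apply; exact: (@measurable_itv R `[1, +oo[%R).
Qed.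

Lemma integ1Z {R : realType} (k : R) (f : R -> R) : integ1 f -> integ1 (fun x => k * f x).
Proof.
move=> If; have := integrableZl _ k If; apply; exact: (@measurable_itv R `[1, +oo[%R).
Qed.

Lemma integ1B {R : realType} (f g : R -> R) : integ1 f -> integ1 g -> integ1 (fun x => f x - g x).
Proof.
move=> If Ig; have := integ1D If (integ1Z (-1) Ig).
by apply: integ1_eq => x _; rewrite mulN1r.
Qed.

Lemma int1D {R : realType} (f g : R -> R) : integ1 f -> integ1 g -> int1 (fun x => f x + g x) = int1 f + int1 g.
Proof. by move=> If Ig; rewrite /int1 RintegralD //; exact: (@measurable_itv R `[1, +oo[%R). Qed.

Lemma int1Z {R : realType} (k : R) (f : R -> R) : integ1 f -> int1 (fun x => k * f x) = k * int1 f.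
Proof. by move=> If; rewrite /int1 RintegralZl //; exact: (@measurable_itv R `[1, +oo[%R). Qed.

Lemma int1B {R : realType} (f g : R -> R) : integ1 f -> integ1 g -> int1 (fun x => f x - g x) = int1 f - int1 g.
Proof.
move=> If Ig.
rewrite (@int1_eq _ _ (fun x => f x + (-1) * g x)); last by move=> x _; rewrite mulN1r.
by rewrite int1D ?int1Z ?mulN1r //; exact: integ1Z.
Qed.

Lemma int1_EFin {R : realType} (f : R -> R) : integ1 f ->
  (\int[@lebesgue_measure R]_(x in @Dom R) (f x)%:E)%E = (int1 f)%:E.
Proof. move=> If; rewrite /int1 /Rintegral fineK //. by have := integrable_fin_num _ If; apply; exact: (@measurable_itv R `[1, +oo[%R). Qed.

Lemma int1_ge0 {R : realType} (f : R -> R) : (forall x, 1 <= x -> 0 <= f x) -> 0 <= int1 f.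
Proof. by move=> f0; apply: Rintegral_ge0 => x; rewrite /Dom /= in_itv /= andbT; exact: f0. Qed.


Lemma KLformula (R : realType) (g : R -> R -> R) t lam :
  (forall x, 1 <= x -> 0 < g x t) -> 0 < lam ->
  integ1 (fun x => g x t) -> integ1 (fun x => g x t * ln (g x t)) ->
  integ1 (fun x => g x t * ln x) -> integ1 (KLintegrand g t lam) ->
  (\int[@lebesgue_measure R]_(x in @Dom R) (KLintegrand g t lam x)%:E)%E =
  (int1 (fun x => g x t * ln (g x t)) - ln lam * int1 (fun x => g x t)
     + (lam + 1) * int1 (fun x => g x t * ln x))%:E.
Proof.
move=> gpos lam0 I1 I2 I3 IK.
rewrite int1_EFin //; congr (_%:E).
rewrite (@int1_eq _ _ (fun x => (g x t * ln (g x t) + (- ln lam) * g x t)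
                                 + (lam + 1) * (g x t * ln x))).
  rewrite int1D; last 2 first.
  - by apply: integ1D => //; exact: integ1Z.
  - exact: integ1Z.
  rewrite int1D //; last exact: integ1Z.
  by rewrite !int1Z // mulNr.
move=> x x1; rewrite /KLintegrand.
have x0 : 0 < x by exact: lt_le_trans x1.
rewrite ln_div ?posrE ?gpos ?mulr_gt0 ?powR_gt0 //.
rewrite lnM ?posrE ?powR_gt0 // ln_powR; ring.
Qed.

Lemma KLvalue (R : realType) (g : R -> R -> R) t :
  (forall x, 1 <= x -> 0 < g x t) ->
  integ1 (fun x => g x t) -> int1 (fun x => g x t) = 1 ->
  integ1 (fun x => g x t * ln (g x t)) ->
  integ1 (fun x => g x t * ln x) ->
  (forall lam, 0 < lam -> integ1 (KLintegrand g t lam)) ->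
  KL g t \is a fin_num ->
  0 < int1 (fun x => g x t * ln x) /\
  fine (KL g t) = int1 (fun x => g x t * ln (g x t)) + ln (int1 (fun x => g x t * ln x))
                  + 1 + int1 (fun x => g x t * ln x).
Proof.
move=> gpos I1 Hone I2 I3 IK Kfin.
set A := int1 (fun x => g x t * ln (g x t)).
set m := int1 (fun x => g x t * ln x).
have F : forall lam, 0 < lam ->
    (\int[@lebesgue_measure R]_(x in @Dom R) (KLintegrand g t lam x)%:E)%E =
    (A - ln lam + (lam + 1) * m)%:E.
  move=> lam lam0; rewrite KLformula //; last exact: IK.
  by rewrite Hone mulr1.
have inS : forall lam, 0 < lam ->
    [set (\int[@lebesgue_measure R]_(x in @Dom R) (KLintegrand g t lam x)%:E)%E
            | lam in `]0%R, +oo[%classic] (A - ln lam + (lam + 1) * m)%:E.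
  move=> lam lam0; exists lam; last exact: F.
  by rewrite /= in_itv /= andbT.
have m0 : 0 <= m.
  apply: int1_ge0 => x x1; rewrite mulr_ge0 ?ln_ge0 //; exact/ltW/gpos.
have mpos : 0 < m.
  rewrite lt_neqAle m0 andbT; apply/negP => /eqP m0'.
  set r := fine (KL g t).
  have Kr : KL g t = r%:E by rewrite /r fineK.
  have lam0 : 0 < expR (A - r + 1) by exact: expR_gt0.
  have := ereal_inf_lbound (inS _ lam0).
  rewrite -/(KL g t) Kr lee_fin expRK -m0' mulr0 addr0; lra.
split => //.
have im0 : 0 < m^-1 by rewrite invr_gt0.
suff -> : KL g t = (A + ln m + 1 + m)%:E by [].
apply/le_anti/andP; split.
- have := ereal_inf_lbound (inS _ im0).
  rewrite -/(KL g t) lnV ?posrE // mulrDl mulVf ?gt_eqF // mul1r.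
  by move/le_trans; apply; rewrite lee_fin; lra.
- apply: le_ereal_inf_tmp => y [lam]; rewrite /= in_itv /= andbT => lam0 <-.
  rewrite F // lee_fin.
  have := @le_ln1Dx _ (lam * m - 1).
  rewrite [1 + _]addrC subrK lnM ?posrE // => H.
  have := H (_ : -1 < lam * m - 1).
  have : 0 < lam * m by rewrite mulr_gt0.
  nra.
Qed.

Lemma near_abs_lt (R : realType) (eps t : R) : `|t| < eps -> \forall s \near t, `|s| < eps.
Proof.
move=> te; apply/nbhs_normP; exists (eps - `|t|); first by rewrite /= subr_gt0.
move=> s /= hs.
have := ler_normD t (s - t); rewrite addrC subrK => hs2.
have : `|s - t| = `|t - s| by rewrite distrC.
lra.
Qed.

Lemma deriv_cst_near (R : realType) (G : R -> R) (t c d : R) :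
  (\forall s \near t, G s = c) -> is_derive t (1:R) G d -> d = 0.
Proof.
move=> Gc D.
rewrite -(@derive_val _ _ _ _ _ _ _ D).
rewrite (near_eq_derive _ (g := fun=> c)).
  by rewrite derive_cst.
exact: Gc.
Qed.

Lemma d1_uln (R : realType) (u : R -> R) (t : R) :
  derivable u t 1 -> 0 < u t ->
  derive1 (fun s => u s * ln (u s)) t = derive1 u t * (ln (u t) + 1).
Proof.
move=> du u0.
have Du : is_derive t (1:R) u (derive1 u t) by rewrite derive1E; exact: derivableP.
have Dl := is_derive1_comp (is_derive1_ln u0) Du.
have DM := is_deriveM Du Dl.
rewrite derive1E (@derive_val _ _ _ _ _ _ _ DM) /GRing.scale /=.
by field; rewrite gt_eqF.
Qed.

Lemma d1_uc (R : realType) (u : R -> R) (c t : R) :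
  derivable u t 1 -> derive1 (fun s => u s * c) t = derive1 u t * c.
Proof.
move=> du.
have Du : is_derive t (1:R) u (derive1 u t) by rewrite derive1E; exact: derivableP.
have DM := is_deriveM Du (is_derive_cst c t (1:R)).
rewrite derive1E; have -> : (fun s => u s * c) = u * cst c by [].
rewrite (@derive_val _ _ _ _ _ _ _ DM) /GRing.scale /=; ring.
Qed.

Lemma d2_uln (R : realType) (u : R -> R) (eps : R) : 0 < eps ->
  (forall s, `|s| < eps -> derivable u s 1 /\ 0 < u s) -> derivable (derive1 u) 0 1 ->
  derive1 (fun s => derive1 (fun s => u s * ln (u s)) s) 0 =
  derive1 (derive1 u) 0 * (ln (u 0) + 1) + derive1 u 0 ^+ 2 / u 0.
Proof.
move=> eps0 H d2.
have [du0 u0] : derivable u 0 1 /\ 0 < u 0 by apply: H; rewrite normr0.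
rewrite derive1E (near_eq_derive _ (g := fun s => derive1 u s * (ln (u s) + 1))); last first.
  near=> s.
  have hs : `|s| < eps by near: s; apply: near_abs_lt; rewrite normr0.
  have [ds us] := H s hs.
  exact: d1_uln.
have Du : is_derive (0:R) (1:R) u (derive1 u 0) by rewrite derive1E; exact: derivableP.
have D2 : is_derive (0:R) (1:R) (derive1 u) (derive1 (derive1 u) 0).
  by rewrite derive1E; exact: derivableP.
have Dl := is_derive1_comp (is_derive1_ln u0) Du.
have Dl1 := is_deriveD Dl (is_derive_cst (1:R) (0:R) (1:R)).
have DM := is_deriveM D2 Dl1.
have -> : (fun s => derive1 u s * (ln (u s) + 1)) = derive1 u * ((@ln R) \o u + cst 1) by [].
rewrite (@derive_val _ _ _ _ _ _ _ DM) /GRing.scale /=.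
change (((@ln R) \o u + cst 1) 0) with (ln (u 0) + 1).
by field; rewrite gt_eqF.
Unshelve. all: by end_near.
Qed.

Lemma d2_uc (R : realType) (u : R -> R) (c eps : R) : 0 < eps ->
  (forall s, `|s| < eps -> derivable u s 1) -> derivable (derive1 u) 0 1 ->
  derive1 (fun s => derive1 (fun s => u s * c) s) 0 = derive1 (derive1 u) 0 * c.
Proof.
move=> eps0 H d2.
rewrite derive1E (near_eq_derive _ (g := fun s => derive1 u s * c)); last first.
  near=> s.
  have hs : `|s| < eps by near: s; apply: near_abs_lt; rewrite normr0.
  exact: d1_uc (H s hs).
by rewrite -derive1E d1_uc.
Unshelve. all: by end_near.
Qed.

Theorem lemma3 (R : realType) (alpha : R) (g : R -> R -> R) :
  classG alpha g ->
  (exists2 eps : R, 0 < eps &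
     forall t : R, `|t| < eps ->
       (forall lam : R, 0 < lam -> integ1 (KLintegrand g t lam)) /\
       KL g t \is a fin_num) ->
  let h := fun x => dth g x 0 in
  let C := int1 (fun x => x `^ (alpha + 1) / alpha * h x ^+ 2)
           - (int1 (fun x => alpha * h x * ln x)) ^+ 2 in
  forall e : R, 0 < e ->
    exists2 delta : R, 0 < delta &
      forall t : R, `|t| < delta ->
        `|2 * fine (KL g t) - t ^+ 2 * C| <= e * t ^+ 2.
Proof.
move=> [a0 [g0E [eps eps0 [Hg1 Hg Hgl Hlx]]]] [eps' eps'0 HKL] h C e e0.
set a := alpha in a0 g0E h C *.
pose r := Num.min eps eps'.
have r0 : 0 < r by rewrite lt_min eps0 eps'0.
have rE : forall s : R, `|s| < r -> `|s| < eps /\ `|s| < eps'.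
  by move=> s; rewrite /r lt_min => /andP[].
pose m := fun t => int1 (fun x => g x t * ln x).
pose A := fun t => int1 (fun x => g x t * ln (g x t)).
pose m1 := fun t => int1 (fun x => dth (fun x t => g x t * ln x) x t).
pose A1 := fun t => int1 (fun x => dth (fun x t => g x t * ln (g x t)) x t).
pose m2 := fun t => int1 (fun x => d2th (fun x t => g x t * ln x) x t).
pose A2 := fun t => int1 (fun x => d2th (fun x t => g x t * ln (g x t)) x t).
have KLval : forall t, `|t| < r -> 0 < m t /\ fine (KL g t) = A t + ln (m t) + 1 + m t.
  move=> t /rE [te te'].
  have [gp [Ig Ione]] := Hg1 t te.
  have [_ IgL _ _ _] := Hgl t te.
  have [_ Igx _ _ _] := Hlx t te.
  have [IK Kf] := HKL t te'.
  exact: KLvalue.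
pose P := fun t => A t + ln (m t) + 1 + m t.
pose DP := fun t => A1 t + m1 t / m t + m1 t.
have DerP : forall t, `|t| < r -> is_derive t (1:R) P (DP t).
  move=> t tr; have [te te'] := rE t tr.
  have [mt _] := KLval t tr.
  have [_ _ _ _ [DA _]] := Hgl t te.
  have [_ _ _ _ [Dm _]] := Hlx t te.
  have DA' : is_derive t (1:R) A (A1 t) := DA.
  have Dm' : is_derive t (1:R) m (m1 t) := Dm.
  have Dl := is_derive1_comp (is_derive1_ln mt) Dm'.
  have D1 := is_deriveD (is_deriveD (is_deriveD DA' Dl) (is_derive_cst (1:R) t (1:R))) Dm'.
  rewrite /P.
  apply: (is_derive_eq D1); rewrite /DP /=; field; by rewrite gt_eqF.
have r00 : `|0 : R| < r by rewrite normr0.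
have [e00 e00'] := rE 0 r00.
have [gp0 [Ig0 Ione0]] := Hg1 0 e00.
have [Dg0 Ig0' Ih Ig2 [DG DG1]] := Hg 0 e00.
have [_ IgL0 IdgL0 Id2gL0 [DA0 DA10]] := Hgl 0 e00.
have [_ Igx0 Idgx0 Id2gx0 [Dm0 Dm10]] := Hlx 0 e00.
pose g2 := fun x => d2th g x 0.
have m0E : m 0 = a^-1.
  rewrite /m -(int_pareto_ln a0); apply: int1_eq => x x1; by rewrite g0E.
have A0E : A 0 = ln a - (a + 1) * a^-1.
  have := @KLformula R g 0 a gp0 a0 Ig0 IgL0 Igx0 ((HKL 0 e00').1 a a0).
  rewrite int1_EFin; last exact: ((HKL 0 e00').1 a a0).
  rewrite (@int1_eq _ _ (fun x => 0 * g x 0)); last first.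
    move=> x x1; rewrite /KLintegrand g0E // divff ?ln1 ?mul0r //.
    by rewrite gt_eqF // mulr_gt0 // powR_gt0 // (lt_le_trans ltr01 x1).
  rewrite int1Z // mul0r Ione0 mulr1 -/(A 0) -/(m 0) m0E => /eqP; rewrite eqe => /eqP H.
  lra.
have P0 : P 0 = 0.
  rewrite /P A0E m0E lnV ?posrE //; field; by rewrite gt_eqF.
have inth : int1 h = 0.
  apply: (@deriv_cst_near _ (fun s => int1 (fun x => g x s)) 0 1) DG.
  near=> s.
  have hs : `|s| < eps by near: s; apply: near_abs_lt; rewrite normr0.
  by have [_ []] := Hg1 s hs.
have intg2 : int1 g2 = 0.
  apply: (@deriv_cst_near _ (fun s => int1 (fun x => dth g x s)) 0 0) DG1.
  near=> s.
  have hs : `|s| < eps by near: s; apply: near_abs_lt; rewrite normr0.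
  have [_ _ _ _ [DGs _]] := Hg s hs.
  apply: (@deriv_cst_near _ (fun s => int1 (fun x => g x s)) s 1) DGs.
  near=> s'.
  have hs' : `|s'| < eps by near: s'; apply: near_abs_lt.
  by have [_ []] := Hg1 s' hs'.
have lng0 : forall x, 1 <= x -> ln (g x 0) = ln a + (- a - 1) * ln x.
  move=> x x1; have x0 : 0 < x by exact: lt_le_trans x1.
  by rewrite g0E // lnM ?posrE ?powR_gt0 // ln_powR.
have pw1 : forall x, 1 <= x -> dth (fun x t => g x t * ln (g x t)) x 0 =
    (ln a + 1) * h x + (- (a + 1)) * (h x * ln x).
  move=> x x1; rewrite /dth d1_uln; last 2 first.
  - exact: (Dg0 x x1).1.
  - exact: gp0.
  rewrite lng0 // /h /dth; ring.
have pw2 : forall x, 1 <= x -> dth (fun x t => g x t * ln x) x 0 = h x * ln x.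
  by move=> x x1; rewrite /dth d1_uc //; exact: (Dg0 x x1).1.
have pw3 : forall x, 1 <= x -> d2th (fun x t => g x t * ln (g x t)) x 0 =
    (ln a + 1) * g2 x + (- (a + 1)) * (g2 x * ln x) + x `^ (a + 1) / a * h x ^+ 2.
  move=> x x1; have x0 : 0 < x by exact: lt_le_trans x1.
  rewrite /d2th /dth (@d2_uln _ _ eps) //; last 2 first.
  - move=> s hs; have [H1 _ _ _ _] := Hg s hs.
    split; [exact: (H1 x x1).1 | exact: (Hg1 s hs).1 x x1].
  - exact: (Dg0 x x1).2.
  rewrite lng0 // g0E // /g2 /h /d2th /dth.
  have -> : x `^ (- a - 1) = (x `^ (a + 1))^-1 by rewrite -powRN opprD.
  field; rewrite ?gt_eqF ?powR_gt0 //.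
have pw4 : forall x, 1 <= x -> d2th (fun x t => g x t * ln x) x 0 = g2 x * ln x.
  move=> x x1; rewrite /d2th /dth (@d2_uc _ _ _ eps) //.
  - by move=> s hs; have [H1 _ _ _ _] := Hg s hs; exact: (H1 x x1).1.
  - exact: (Dg0 x x1).2.
have IhL : integ1 (fun x => h x * ln x) := integ1_eq pw2 Idgx0.
have Ig2L : integ1 (fun x => g2 x * ln x) := integ1_eq pw4 Id2gx0.
have Ih' : integ1 h := Ih.
have Ig2' : integ1 g2 := Ig2.
set mh := int1 (fun x => h x * ln x).
set mg := int1 (fun x => g2 x * ln x).
set Q := int1 (fun x => x `^ (a + 1) / a * h x ^+ 2).
have A1E : A1 0 = - (a + 1) * mh.
  rewrite /A1 (int1_eq pw1) int1D; last 2 first.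
  - exact: integ1Z.
  - exact: integ1Z.
  by rewrite !int1Z // inth mulr0 add0r.
have m1E : m1 0 = mh by rewrite /m1 (int1_eq pw2).
have m2E : m2 0 = mg by rewrite /m2 (int1_eq pw4).
have IQ : integ1 (fun x => x `^ (a + 1) / a * h x ^+ 2).
  apply: (@integ1_eq _ (fun x => d2th (fun x t => g x t * ln (g x t)) x 0 -
       ((ln a + 1) * g2 x + (- (a + 1)) * (g2 x * ln x)))).
    by move=> x x1; rewrite pw3 //; ring.
  apply: integ1B => //; apply: integ1D; exact: integ1Z.
have A2E : A2 0 = - (a + 1) * mg + Q.
  rewrite /A2 (int1_eq pw3) int1D //; last first.
    by apply: integ1D; exact: integ1Z.
  rewrite int1D; last 2 first.
  - exact: integ1Z.
  - exact: integ1Z.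
  by rewrite !int1Z // intg2 mulr0 add0r.
have ahE : int1 (fun x => a * h x * ln x) = a * mh.
  rewrite -int1Z //; apply: int1_eq => x _; by rewrite mulrA.
have DP0 : DP 0 = 0.
  rewrite /DP A1E m1E m0E; field; by rewrite gt_eqF.
have DDP : is_derive (0:R) (1:R) DP C.
  have DA1 : is_derive (0:R) (1:R) A1 (A2 0) := DA10.
  have Dm1 : is_derive (0:R) (1:R) m1 (m2 0) := Dm10.
  have Dm' : is_derive (0:R) (1:R) m (m1 0) := Dm0.
  have mn0 : m 0 != 0 by rewrite m0E invr_eq0 gt_eqF.
  have DV := is_deriveV mn0 Dm'.
  have DMl := is_deriveM Dm1 DV.
  have D := is_deriveD (is_deriveD DA1 DMl) Dm1.
  rewrite /DP; apply: (is_derive_eq D).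
  rewrite /C ahE A2E m2E m1E m0E /GRing.scale /= -/mh -/Q.
  field; by rewrite gt_eqF.
have [d d0 Hd] := taylor2 r0 DerP P0 DP0 DDP e0.
exists (Num.min d r); first by rewrite lt_min d0 r0.
move=> t; rewrite lt_min => /andP[td tr].
have [_ ->] := KLval t tr.
exact: Hd.
Unshelve. all: by end_near.
Qed.
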